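(* Let $D_0, D_1, D_2$ be three mutually tangent disks such that $D_1$ and $D_2$ are inner disks of positive curvatures $B_1$ and $B_2$, and $D_0$ is an outer disk of negative curvature $B_0$ containing them. Let $\mathbf a = \mathrm{spin}(D_0,D_1)$ and $\mathbf b = \mathrm{spin}(D_0,D_2)$ be tangency spinors, viewed as vectors in $\mathbb R^2$, and let $M=[\mathbf a\ \mathbf b]$ be the $2\times 2$ matrix with columns $\mathbf a,\mathbf b$. Put $B = |\mathbf a\times\mathbf b| = |\det M|$. Then $$B_0=-B,\qquad B_1 = B+\|\mathbf a\|^2,\qquad B_2 = B+\|\mathbf b\|^2 .$$ Moreover, setting $$B_{3} = B+\|\mathbf a+\mathbf b\|^2 = B+\|\mathbf a\|^2+\|\mathbf b\|^2+2\,\mathbf a\cdot\mathbf b,\qquad B_{4} = B+\|\mathbf a-\mathbf b\|^2 = B+\|\mathbf a\|^2+\|\mathbf b\|^2-2\,\mathbf a\cdot\mathbf b,$$ both quadruples $(B_0,B_1,B_2,B_3)$ and $(B_0,B_1,B_2,B_4)$ satisfy the Descartes formula $2(A^2+B^2+C^2+D^2)=(A+B+C+D)^2$.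
   Context: A disk is the interior (inner disk) or the exterior (outer disk) of a circle; an inner disk of radius $r>0$ has curvature $1/r>0$, an outer disk bounded by a circle of radius $r$ is assigned signed radius $-r$ and curvature $-1/r<0$. Tangent disks are assumed not to overlap. Identify the plane with $\mathbb C\cong\mathbb R^2$. For an ordered pair $(A,B)$ of tangent disks with centers $c_A,c_B\in\mathbb C$ and signed radii $r_A,r_B$, the tangency spinor is $\mathrm{spin}(A,B)=\pm\sqrt{(c_B-c_A)/(r_Ar_B)}\in\mathbb C$, defined up to sign and regarded as the vector $(\mathrm{Re},\mathrm{Im})\in\mathbb R^2$. For $\mathbf a=(x,y)^T,\mathbf b=(x',y')^T\in\mathbb R^2$: $\mathbf a\cdot\mathbf b=xx'+yy'$, $\mathbf a\times\mathbf b=xy'-x'y=\det[\mathbf a\ \mathbf b]$, $\|\mathbf a\|^2=\mathbf a\cdot\mathbf a$. *)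

(* Defs.v *)
From HB Require Import structures.
From mathcomp Require Import all_boot all_order all_algebra.
Set Implicit Arguments. Unset Strict Implicit. Unset Printing Implicit Defensive.
Import Order.TTheory GRing.Theory Num.Theory.
Local Open Scope ring_scope.

Section Disks.
Variable R : rcfType.

(* A point / vector of the plane C ~ R^2, as (Re, Im). *)
Definition vec := (R * R)%type.

Definition vdot (a b : vec) : R := a.1 * b.1 + a.2 * b.2.
Definition vcross (a b : vec) : R := a.1 * b.2 - b.1 * a.2.
Definition vnorm2 (a : vec) : R := vdot a a.
Definition vadd (a b : vec) : vec := (a.1 + b.1, a.2 + b.2).
Definition vsub (a b : vec) : vec := (a.1 - b.1, a.2 - b.2).
Definition vdist (a b : vec) : R := Num.sqrt (vnorm2 (vsub a b)).

Record disk := Disk { center : vec; srad : R }.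
Definition inner (D : disk) : Prop := 0 < srad D.
Definition outer (D : disk) : Prop := srad D < 0.
Definition curv (D : disk) : R := (srad D)^-1.

(* Tangent, non-overlapping disks: two inner disks are externally tangent;
   an inner disk and an outer disk are tangent with the inner disk inside
   the bounding circle of the outer one (internal tangency, the inner radius
   being strictly smaller); two outer disks always overlap. *)
Definition tangent (A B : disk) : Prop :=
  (inner A /\ inner B /\ vdist (center A) (center B) = srad A + srad B) \/
  (srad A * srad B < 0 /\ srad A + srad B < 0 /\
   vdist (center A) (center B) = - (srad A + srad B)).

(* s = (x, y) is a tangency spinor of (A, B): (x + i y)^2 = (c_B - c_A)/(r_A r_B),
   i.e. s is one of the two square roots (the choice of sign is free). *)
Definition is_spin (A B : disk) (s : vec) : Prop :=
  let d := vsub (center B) (center A) in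
  let k := srad A * srad B in
  s.1 ^+ 2 - s.2 ^+ 2 = d.1 / k /\ 2 * s.1 * s.2 = d.2 / k.

Definition descartes (a b c d : R) : Prop :=
  2 * (a ^+ 2 + b ^+ 2 + c ^+ 2 + d ^+ 2) = (a + b + c + d) ^+ 2.

End Disks.

(* Main.v *)
Require Import Defs.
From HB Require Import structures.
From mathcomp Require Import all_boot all_order all_algebra.
From mathcomp Require Import ring lra.
Import Order.TTheory GRing.Theory Num.Theory.
Local Open Scope ring_scope.

Lemma sqrt_sq (R : rcfType) (p q v : R) :
  Num.sqrt (p * p + q * q) = v -> p * p + q * q = v ^+ 2.
Proof.
move=> <-; rewrite sqr_sqrtr //; apply: addr_ge0; rewrite -expr2; exact: sqr_ge0.
Qed.

Lemma sq_eq_neg (R : rcfType) (X Y : R) : X <= 0 -> Y < 0 -> X ^+ 2 = Y ^+ 2 -> X = Y.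
Proof.
move=> hX hY h; have : (X - Y) * (X + Y) = 0 by rewrite -[RHS](subrr (X^+2)) {2}h; ring.
move/eqP; rewrite mulf_eq0 => /orP [/eqP H|/eqP H].
  by apply/eqP; rewrite -subr_eq0 H.
exfalso; lra.
Qed.

Theorem proposition3p1 (R : rcfType) (D0 D1 D2 : disk R) (a b : vec R) :
  outer D0 -> inner D1 -> inner D2 ->
  tangent D0 D1 -> tangent D0 D2 -> tangent D1 D2 ->
  is_spin D0 D1 a -> is_spin D0 D2 b ->
  let B := `|vcross a b| in
  let B3 := B + vnorm2 (vadd a b) in
  let B4 := B + vnorm2 (vsub a b) in
  curv D0 = - B /\
  curv D1 = B + vnorm2 a /\
  curv D2 = B + vnorm2 b /\
  B3 = B + vnorm2 a + vnorm2 b + 2 * vdot a b /\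
  B4 = B + vnorm2 a + vnorm2 b - 2 * vdot a b /\
  descartes (curv D0) (curv D1) (curv D2) B3 /\
  descartes (curv D0) (curv D1) (curv D2) B4.
Proof.
case: D0 => [[x0 y0] r0]; case: D1 => [[x1 y1] r1]; case: D2 => [[x2 y2] r2].
case: a => [a1 a2]; case: b => [b1 b2].
rewrite /outer /inner /tangent /is_spin /curv /vdist /vnorm2 /vsub /vdot /=.
move=> h0 h1 h2 t01 t02 t12 [s1x s1y] [s2x s2y].
have P1 : r0 + r1 < 0.
  case: t01 => [[H _]|[_ [H _]]] //; exfalso; move: H h0; rewrite /inner /=; lra.
have P2 : r0 + r2 < 0.
  case: t02 => [[H _]|[_ [H _]]] //; exfalso; move: H h0; rewrite /inner /=; lra.
have N1 : (x0 - x1) * (x0 - x1) + (y0 - y1) * (y0 - y1) = (r0 + r1) ^+ 2.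
  case: t01 => [[H _]|[_ [_ /sqrt_sq ->]]]; [exfalso; move: H h0; rewrite /inner /=; lra| by rewrite sqrrN].
have N2 : (x0 - x2) * (x0 - x2) + (y0 - y2) * (y0 - y2) = (r0 + r2) ^+ 2.
  case: t02 => [[H _]|[_ [_ /sqrt_sq ->]]]; [exfalso; move: H h0; rewrite /inner /=; lra| by rewrite sqrrN].
have N12 : (x1 - x2) * (x1 - x2) + (y1 - y2) * (y1 - y2) = (r1 + r2) ^+ 2.
  case: t12 => [[_ [_ /sqrt_sq ->]] //|[H _]]; exfalso; move: H; rewrite /=; have := mulr_gt0 h1 h2; lra.
have r0n : r0 != 0 by lra.
have r1n : r1 != 0 by lra.
have r2n : r2 != 0 by lra.
have k1n : r0 * r1 != 0 by rewrite mulf_neq0.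
have k2n : r0 * r2 != 0 by rewrite mulf_neq0.
have E1x : x1 - x0 = (a1 ^+ 2 - a2 ^+ 2) * (r0 * r1) by rewrite s1x divfK.
have E1y : y1 - y0 = 2 * a1 * a2 * (r0 * r1) by rewrite s1y divfK.
have E2x : x2 - x0 = (b1 ^+ 2 - b2 ^+ 2) * (r0 * r2) by rewrite s2x divfK.
have E2y : y2 - y0 = 2 * b1 * b2 * (r0 * r2) by rewrite s2y divfK.
set na := a1 * a1 + a2 * a2.
set nb := b1 * b1 + b2 * b2.
have Hna : na * (r0 * r1) = r0 + r1.
  apply: sq_eq_neg; [|lra|].
    apply: mulr_ge0_le0; first by rewrite /na addr_ge0 // -expr2 sqr_ge0.
    apply: mulr_le0_ge0; lra.
  rewrite -N1; transitivity (((a1 ^+ 2 - a2 ^+ 2) * (r0 * r1)) ^+ 2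
     + (2 * a1 * a2 * (r0 * r1)) ^+ 2); first by rewrite /na; ring.
  rewrite -E1x -E1y; ring.
have Hnb : nb * (r0 * r2) = r0 + r2.
  apply: sq_eq_neg; [|lra|].
    apply: mulr_ge0_le0; first by rewrite /nb addr_ge0 // -expr2 sqr_ge0.
    apply: mulr_le0_ge0; lra.
  rewrite -N2; transitivity (((b1 ^+ 2 - b2 ^+ 2) * (r0 * r2)) ^+ 2
     + (2 * b1 * b2 * (r0 * r2)) ^+ 2); first by rewrite /nb; ring.
  rewrite -E2x -E2y; ring.
set cr := vcross (a1, a2) (b1, b2).
have Hcr : 2 * cr ^+ 2 * ((r0 * r1) * (r0 * r2)) = 2 * (r1 * r2).
  transitivity ((na * (r0 * r1)) * (nb * (r0 * r2)) -
    (((a1 ^+ 2 - a2 ^+ 2) * (r0 * r1)) * ((b1 ^+ 2 - b2 ^+ 2) * (r0 * r2))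
     + (2 * a1 * a2 * (r0 * r1)) * (2 * b1 * b2 * (r0 * r2)))).
    by rewrite /cr /vcross /na /nb /=; ring.
  rewrite -E1x -E1y -E2x -E2y Hna Hnb.
  have : (x1 - x0) * (x2 - x0) + (y1 - y0) * (y2 - y0) =
         r0 ^+ 2 + r0 * r1 + r0 * r2 - r1 * r2.
    have e : 2 * ((x1 - x0) * (x2 - x0) + (y1 - y0) * (y2 - y0)) =
      2 * (r0 ^+ 2 + r0 * r1 + r0 * r2 - r1 * r2).
      transitivity (((x0 - x1) * (x0 - x1) + (y0 - y1) * (y0 - y1)) +
        ((x0 - x2) * (x0 - x2) + (y0 - y2) * (y0 - y2)) -
        ((x1 - x2) * (x1 - x2) + (y1 - y2) * (y1 - y2))); first by ring.
      rewrite N1 N2 N12; ring.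
    by move/(mulfI (_ : (2:R) != 0)): e; apply; rewrite pnatr_eq0.
  move=> ->; ring.
set Bc := `|cr|.
have HB2 : Bc ^+ 2 = cr ^+ 2 by rewrite /Bc real_normK // num_real.
have HBc : Bc = - r0^-1.
  have h : (Bc * r0) ^+ 2 = 1.
    have h12 : r1 * r2 != 0 by rewrite mulf_neq0.
    apply: (mulIf (_ : 2 * (r1 * r2) != 0)); first by rewrite mulf_neq0 // pnatr_eq0.
    rewrite mul1r -[RHS]Hcr -HB2; ring.
  have hB : 0 <= Bc by rewrite /Bc normr_ge0.
  have : Bc * r0 = -1.
    apply: sq_eq_neg; [apply: mulr_ge0_le0; lra|lra|by rewrite h sqrrN expr1n].
  move=> e; rewrite -[Bc](mulfK r0n) e; field; exact: r0n.
have Ha : na = (r0 + r1) / (r0 * r1) by rewrite -Hna mulfK.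
have Hb : nb = (r0 + r2) / (r0 * r2) by rewrite -Hnb mulfK.
have C1 : r1^-1 = Bc + na by rewrite HBc Ha; field; rewrite r0n r1n.
have C2 : r2^-1 = Bc + nb by rewrite HBc Hb; field; rewrite r0n r2n.
have C0 : r0^-1 = - Bc by rewrite HBc opprK.
rewrite /vadd /descartes /= C0 C1 C2.
split; first by [].
split; first by [].
split; first by [].
split; first by rewrite /na /nb; ring.
split; first by rewrite /na /nb; ring.
split.
  apply/eqP; rewrite -subr_eq0; apply/eqP.
  transitivity (4 * (Bc ^+ 2 - cr ^+ 2)); first by rewrite /cr /vcross /na /nb /=; ring.
  by rewrite HB2 subrr mulr0.
apply/eqP; rewrite -subr_eq0; apply/eqP.
transitivity (4 * (Bc ^+ 2 - cr ^+ 2)); first by rewrite /cr /vcross /na /nb /=; ring.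
by rewrite HB2 subrr mulr0.
Qed.
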